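(* Let $P\subseteq\mathbb{R}^2$ be a nonempty closed convex set such that $\tau P=P^{\circ}$. Then either $P$ is a line through the origin, or $P$ is bounded and full-dimensional.
   Context: $\tau:\mathbb{R}^2\to\mathbb{R}^2$ denotes the $90^\circ$ counterclockwise rotation. The polar of $P$ is $P^{\circ}=\{x\in\mathbb{R}^2: y^\top x\le 1\text{ for all }y\in P\}$. *)

(* Defs.v *)
From HB Require Import structures.
From mathcomp Require Import all_boot all_order all_algebra.
From mathcomp Require Import all_classical all_reals all_analysis.
Set Implicit Arguments. Unset Strict Implicit. Unset Printing Implicit Defensive.
Import Order.TTheory GRing.Theory Num.Theory.
Import numFieldNormedType.Exports.
Local Open Scope classical_set_scope.
Local Open Scope ring_scope.

Definition dot2 {R : realType} (x y : 'rV[R]_2) : R := \sum_(i < 2) x 0 i * y 0 i.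

(* 90 degree counterclockwise rotation: (a, b) |-> (-b, a) *)
Definition tau {R : realType} (v : 'rV[R]_2) : 'rV[R]_2 :=
  \row_(j < 2) (if j == 0 then - v 0 1 else v 0 0).

Definition polar {R : realType} (P : set 'rV[R]_2) : set 'rV[R]_2 :=
  [set x | forall y, P y -> dot2 y x <= 1].

Definition convex_set2 {R : realType} (P : set 'rV[R]_2) : Prop :=
  forall x y (t : R), P x -> P y -> 0 <= t -> t <= 1 -> P (t *: x + (1 - t) *: y).

Definition line_through_origin {R : realType} (P : set 'rV[R]_2) : Prop :=
  exists v : 'rV[R]_2, v != 0 /\ P = [set t *: v | t in [set: R]].

Definition full_dimensional {R : realType} (P : set 'rV[R]_2) : Prop :=
  interior P !=set0.

(* Main.v *)
Require Import Defs.
From HB Require Import structures.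
From mathcomp Require Import all_boot all_order all_algebra.
From mathcomp Require Import all_classical all_reals all_analysis.
From mathcomp Require Import ring lra.
Import Order.TTheory GRing.Theory Num.Theory.
Import numFieldNormedType.Exports.
Local Open Scope classical_set_scope.
Local Open Scope ring_scope.

Section S.
Context {R : realType}.
Definition det2 (x y : 'rV[R]_2) : R := x 0 0 * y 0 1 - x 0 1 * y 0 0.

Lemma ord2 (i : 'I_2) : i = 0 \/ i = 1.
Proof. case: i => [[|[|//]]] Hi; [left|right]; exact: val_inj. Qed.

Lemma dot_tau x y : dot2 y (tau x) = det2 x y.
Proof.
rewrite /dot2 !big_ord_recl big_ord0 /tau /det2 !mxE /=.
have -> : (lift ord0 ord0 : 'I_2) = 1 by exact: val_inj.
rewrite /=. lra.
Qed.

Lemma tau_inj : injective (@tau R).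
Proof.
move=> x y /rowP H; apply/rowP => i.
have := H 0; have := H 1; rewrite !mxE /=.
case: (ord2 i) => -> H1 H0; first by [].
by apply: oppr_inj.
Qed.

Lemma comp_le (w : 'rV[R]_2) i : `|w 0 i| <= `|w|.
Proof.
have -> : `|w| = mx_norm w by [].
rewrite mx_normrE.
exact: (le_bigmax _ (fun ij : 'I_1 * 'I_2 => `|w ij.1 ij.2|) (0, i)).
Qed.

Lemma norm_le (w : 'rV[R]_2) K : 0 <= K -> (forall i, `|w 0 i| <= K) -> `|w| <= K.
Proof.
move=> K0 H; have -> : `|w| = mx_norm w by [].
rewrite mx_normrE; apply: bigmax_le => // -[a b] _ /=.
by rewrite (ord1 a).
Qed.

End S.

Theorem proposition2 (R : realType) (P : set 'rV[R]_2) :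
  P !=set0 -> closed P -> convex_set2 P -> tau @` P = polar P ->
  line_through_origin P \/ (bounded_set P /\ full_dimensional P).
Proof.
move=> [p Pp] _ _ HT.
have HA : forall x y, P x -> P y -> det2 x y <= 1.
  move=> x y Px Py.
  have : polar P (tau x) by rewrite -HT; exists x.
  by move=> /(_ y Py); rewrite dot_tau.
have HB : forall w, (forall y, P y -> det2 w y <= 1) -> P w.
  move=> w Hw.
  have : polar P (tau w) by move=> y Py; rewrite dot_tau; exact: Hw.
  by rewrite -HT => -[x Px /tau_inj <-].
have Habs : forall x y, P x -> P y -> `|det2 x y| <= 1.
  move=> x y Px Py; rewrite ler_norml HA // andbT.
  have := HA y x Py Px; rewrite /det2; lra.
case: (pselect (exists a b, P a /\ P b /\ det2 a b != 0)).
- move=> [a [b [Pa [Pb dab]]]]; right.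
  set d := det2 a b.
  set K := (`|a 0 0| + `|a 0 1| + `|b 0 0| + `|b 0 1|) / `|d|.
  have K0 : 0 <= K by rewrite /K divr_ge0 // !addr_ge0.
  have Kb : forall w, P w -> forall i, `|w 0 i| <= K.
    move=> w Pw i.
    have E : w 0 i * d = det2 w b * a 0 i - det2 w a * b 0 i.
      by case: (ord2 i) => ->; rewrite /d /det2; ring.
    rewrite /K ler_pdivlMr ?normr_gt0 // -normrM E.
    apply: (le_trans (ler_normB _ _)); rewrite !normrM.
    have h1 := Habs _ _ Pw Pb; have h2 := Habs _ _ Pw Pa.
    have e1 : `|det2 w b| * `|a 0 i| <= 1 * `|a 0 i| by apply: ler_pM.
    have e2 : `|det2 w a| * `|b 0 i| <= 1 * `|b 0 i| by apply: ler_pM.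
    have := normr_ge0 (a 0 0); have := normr_ge0 (a 0 1).
    have := normr_ge0 (b 0 0); have := normr_ge0 (b 0 1).
    by case: (ord2 i) e1 e2 => -> e1 e2; lra.
  split.
  + apply: (proj2 (@ex_bound _ _ _ id _ (globally_properfilter Pp))); exists K => w Pw /=; exact: (@norm_le _ w K K0 (Kb w Pw)).
  + exists 0; rewrite /interior /=.
    apply/nbhs_ballP.
    have r0 : 0 < 1 / (2 * (K + 1)) by rewrite divr_gt0 // mulr_gt0 // ltr_wpDl.
    exists (1 / (2 * (K + 1))) => //= w Hw.
    move: Hw; rewrite -ball_normE /= sub0r normrN => Hw.
    apply: HB => y Py.
    have hw i : `|w 0 i| <= 1 / (2 * (K + 1)) by apply/ltW/(le_lt_trans (comp_le w i)).
    have hy i : `|y 0 i| <= K + 1 by apply: (le_trans (Kb y Py i)); lra.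
    have f1 : w 0 0 * y 0 1 <= 1 / (2 * (K + 1)) * (K + 1).
      by apply: (le_trans (ler_norm _)); rewrite normrM; apply: ler_pM.
    have f2 : - (w 0 1 * y 0 0) <= 1 / (2 * (K + 1)) * (K + 1).
      by apply: (le_trans (ler_norm _)); rewrite normrN normrM; apply: ler_pM.
    have K1 : K + 1 != 0 by rewrite gt_eqF // ltr_wpDl.
    have -> : 1 = 2 * (1 / (2 * (K + 1)) * (K + 1)) :> R.
      by rewrite mul1r invfM -mulrA mulVf // mulr1 divff.
    rewrite /det2; lra.
- move=> Hn; left.
  have Hz : forall x y, P x -> P y -> det2 x y = 0.
    move=> x y Px Py; apply: contra_notP Hn => h; exists x, y; split=> //; split=> //.
    exact/eqP.
  have [v [Pv v0]] : exists v, P v /\ v != 0.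
    case: (pselect (exists v, P v /\ v != 0)) => // Hv; exfalso.
    have P1 : P (const_mx 1 : 'rV[R]_2).
      apply: HB => y Py.
      have -> : y = 0.
        case: (eqVneq y 0) => // yn; exfalso; apply: Hv; exists y; split => //.
      rewrite /det2 !mxE; lra.
    apply: Hv; exists (const_mx 1 : 'rV[R]_2); split => //.
    apply/eqP => /rowP /(_ 0); rewrite !mxE; apply/eqP; exact: oner_neq0.
  exists v; split => //; apply/seteqP; split.
  + move=> y Py; have h := Hz _ _ Pv Py; move: h; rewrite /det2 => h.
    case: (eqVneq (v 0 0) 0) => h0.
      have h1 : v 0 1 != 0.
        apply: contraNneq v0 => h1; apply/eqP/rowP => i; rewrite !mxE.
        by case: (ord2 i) => ->.
      exists (y 0 1 / v 0 1) => //; apply/rowP => i; rewrite !mxE.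
      case: (ord2 i) => ->; last by rewrite divfK.
      move: h; rewrite h0 mul0r sub0r => /eqP; rewrite oppr_eq0 mulf_eq0 (negbTE h1) /= => /eqP ->.
      by rewrite mulr0.
    exists (y 0 0 / v 0 0) => //; apply/rowP => i; rewrite !mxE.
    case: (ord2 i) => ->; first by rewrite divfK.
    apply: (mulfI h0).
    have -> : v 0 0 * y 0 1 = v 0 1 * y 0 0 by lra.
    by rewrite mulrA mulrCA mulfV // mulr1 mulrC.
  + move=> _ [t _ <-]; apply: HB => y Py.
    have -> : det2 (t *: v) y = t * det2 v y by rewrite /det2 !mxE; ring.
    by rewrite Hz // mulr0 ler01.
Qed.
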